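(* A finite sequence $i_1i_2\dots i_n$ of symbols from $\{1,2,\dots,N\}$ is stable if and only if it can be reduced to the empty sequence by a finite number of operations of the following types: (a) transposing two adjacent blocks of consecutive terms, each block consisting of two symbols (i.e. replacing $\dots ab\,cd\dots$ by $\dots cd\,ab\dots$); (b) deleting a block of two consecutive identical symbols.
   Context: A sequence $i_1i_2\dots i_n$ of symbols is stable if its terms can be partitioned into disjoint pairs of identical symbols, with one term of each pair at an odd position and the other at an even position; equivalently, $n$ is even and the formal alternating sum $i_1-i_2+\dots+i_{n-1}-i_n$ vanishes as a formal sum of symbols. *)

(* Defs.v *)
From mathcomp Require Import all_boot.
Set Implicit Arguments. Unset Strict Implicit. Unset Printing Implicit Defensive.

(* Sequences of symbols are [seq nat]; positions are 0-based indices
   0 .. size s - 1 (parity of i + j is unaffected by the shift to 1-based). *)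

Definition stable (s : seq nat) : Prop :=
  exists P : seq (nat * nat),
    perm_eq (flatten [seq [:: p.1; p.2] | p <- P]) (iota 0 (size s)) /\
    all (fun p => (nth 0 s p.1 == nth 0 s p.2) && odd (p.1 + p.2)) P.

Inductive step : seq nat -> seq nat -> Prop :=
  | step_swap (u v : seq nat) (a b c d : nat) :
      step (u ++ [:: a; b; c; d] ++ v) (u ++ [:: c; d; a; b] ++ v)
  | step_del (u v : seq nat) (a : nat) :
      step (u ++ [:: a; a] ++ v) (u ++ v).

Inductive reduces_to_nil : seq nat -> Prop :=
  | rtn_nil : reduces_to_nil [::]
  | rtn_step (s t : seq nat) : step s t -> reduces_to_nil t -> reduces_to_nil s.

(* Main.v *)
Require Import Defs.
From mathcomp Require Import all_boot.
From mathcomp Require Import zify.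
Set Implicit Arguments. Unset Strict Implicit.

Fixpoint evens (s : seq nat) : seq nat :=
  if s is x :: s' then x :: odds s' else [::]
with odds (s : seq nat) : seq nat :=
  if s is _ :: s' then evens s' else [::].

Lemma eo_cat u v : evens (u ++ v) = evens u ++ (if odd (size u) then odds v else evens v)
  /\ odds (u ++ v) = odds u ++ (if odd (size u) then evens v else odds v).
Proof.
elim: u => [|x u [IH1 IH2]] //=; rewrite IH1 IH2; by case: (odd (size u)).
Qed.
Lemma evens_cat u v : evens (u ++ v) = evens u ++ (if odd (size u) then odds v else evens v).
Proof. exact: (eo_cat u v).1. Qed.
Lemma odds_cat u v : odds (u ++ v) = odds u ++ (if odd (size u) then evens v else odds v).
Proof. exact: (eo_cat u v).2. Qed.

Definition balanced s := perm_eq (evens s) (odds s).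

Lemma step_bal s t : step s t -> (balanced s <-> balanced t).
Proof.
case => [u v a b c d | u v a]; rewrite /balanced !evens_cat !odds_cat;
  case: (odd (size u)) => /=; split => /permP H; apply/permP => p;
  move: (H p); rewrite !count_cat /=; lia.
Qed.

Inductive rt : seq nat -> seq nat -> Prop :=
 | rt_refl s : rt s s
 | rt_cons s t r : step s t -> rt t r -> rt s r.

Lemma rt_trans s t r : rt s t -> rt t r -> rt s r.
Proof. elim => // s1 t1 r1 H _ IH /IH; exact: rt_cons. Qed.

Lemma rt_red s t : rt s t -> reduces_to_nil t -> reduces_to_nil s.
Proof. elim => // s1 t1 r1 H _ IH /IH; exact: rtn_step. Qed.

Lemma rt_bal s t : rt s t -> balanced s -> balanced t.
Proof. elim => // s1 t1 r1 H _ IH Hs; apply: IH. exact: (proj1 (step_bal H) Hs). Qed.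

Lemma move_blk m : forall u w x y v, size w = m.*2 ->
  rt (u ++ w ++ [:: x; y] ++ v) (u ++ [:: x; y] ++ w ++ v).
Proof.
elim: m => [|m IH] u w x y v.
  by move/size0nil => ->; apply: rt_refl.
case: w => [|c [|d w]] //= [] Hw.
have := IH (u ++ [:: c; d]) w x y v Hw; rewrite -!catA /= => H.
apply: (rt_trans H).
apply: rt_cons; first exact: (step_swap u (w ++ v) c d x y).
exact: rt_refl.
Qed.

Lemma size_evens s : size (evens s) = size (odds s) + odd (size s).
Proof.
elim: s => //= x s IH; rewrite IH; case: (odd (size s)) => /=; lia.
Qed.

Lemma mem_eo_split b s :
  (b \in evens s -> exists u w, s = u ++ b :: w /\ ~~ odd (size u)) /\
  (b \in odds s -> exists u w, s = u ++ b :: w /\ odd (size u)).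
Proof.
elim: s => [|x s [IH1 IH2]] //=; split.
- rewrite inE; case/orP => [/eqP -> | /IH2 [u [w [-> Hu]]]].
    by exists [::], s.
  by exists (x :: u), w; rewrite /= Hu.
- move/IH1 => [u [w [-> Hu]]]; by exists (x :: u), w; rewrite /= Hu.
Qed.

Lemma bal_red n s : size s <= n -> balanced s -> reduces_to_nil s.
Proof.
elim: n s => [|n IH] s.
  by rewrite leqn0 => /nilP ->; constructor.
case: s => [|a [|b t]] Hs Hb; first by constructor.
  by move: (perm_size Hb).
have Hev : ~~ odd (size (a :: b :: t)).
  move: (perm_size Hb); rewrite size_evens => H; apply/negP => Ho; move: H; rewrite Ho /=; lia.
case: (eqVneq b a) Hb => [-> | Hba] Hb.
  have Hst : step (a :: a :: t) t by exact: (step_del [::] t a).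
  apply: (rtn_step Hst); apply: IH; first by move: Hs => /=; lia.
  exact: (proj1 (step_bal Hst) Hb).
have : b \in evens t.
  have : b \in evens (a :: b :: t) by rewrite (perm_mem Hb) /= inE eqxx.
  by rewrite /= inE (negbTE Hba).
case/(proj1 (mem_eo_split _ _)) => w [[|y v] [Ht Hw]].
  by move: Hev; rewrite Ht /= size_cat /= addn1 /= negbK (negbTE Hw).
have Hm : size w = (size w)./2.*2.
  by rewrite -{1}(odd_double_half (size w)) (negbTE Hw).
have R1 := @move_blk _ [:: a; b] w b y v Hm.
have Hst : step ([:: a] ++ [:: b; b] ++ (y :: w ++ v)) ([:: a] ++ (y :: w ++ v)).
  exact: step_del.
have R : rt (a :: b :: t) (a :: y :: w ++ v).
  rewrite Ht; apply: (rt_trans R1); apply: (rt_cons Hst); exact: rt_refl.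
apply: (rt_red R); apply: IH; last exact: rt_bal R Hb.
move: Hs; rewrite Ht /= !size_cat /=; lia.
Qed.

Lemma stable_map s t (f : nat -> nat) (Q : seq (nat * nat)) :
  perm_eq (flatten [seq [:: p.1; p.2] | p <- Q] ++ map f (iota 0 (size t))) (iota 0 (size s)) ->
  all (fun p => (nth 0 s p.1 == nth 0 s p.2) && odd (p.1 + p.2)) Q ->
  (forall i, i < size t -> nth 0 s (f i) = nth 0 t i /\ odd (f i) = odd i) ->
  stable t -> stable s.
Proof.
move=> HQ HQa Hf [P [HP HPa]].
exists (Q ++ [seq (f p.1, f p.2) | p <- P]); split.
- rewrite map_cat flatten_cat; apply: perm_trans HQ; rewrite perm_cat2l.
  have -> : flatten [seq [:: p.1; p.2] | p <- [seq (f p.1, f p.2) | p <- P]]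
      = map f (flatten [seq [:: p.1; p.2] | p <- P]).
    by elim: (P) => //= p P' ->.
  exact: perm_map.
- rewrite all_cat HQa /=; apply/allP => q /mapP [p pP ->] /=.
  have memP : forall i, i \in flatten [seq [:: p.1; p.2] | p <- P] -> i < size t.
    by move=> i; rewrite (perm_mem HP) mem_iota.
  have h1 : p.1 < size t.
    apply: memP; apply/flattenP; exists [:: p.1; p.2]; last by rewrite inE eqxx.
    by apply/mapP; exists p.
  have h2 : p.2 < size t.
    apply: memP; apply/flattenP; exists [:: p.1; p.2]; last by rewrite !inE eqxx orbT.
    by apply/mapP; exists p.
  have [e1 o1] := Hf _ h1; have [e2 o2] := Hf _ h2.
  move/allP: HPa => /(_ p pP) /andP [/eqP He Ho].
  by rewrite e1 e2 He eqxx /= oddD o1 o2 -oddD.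
Qed.

Lemma stable_del u v a : stable (u ++ v) -> stable (u ++ [:: a; a] ++ v).
Proof.
set k := size u.
apply: (@stable_map _ _ (fun i => if i < k then i else i.+2) [:: (k, k.+1)]).
- rewrite /= !size_cat /= iotaD add0n iotaD add0n /= map_cat.
  have -> : [seq (if i < k then i else i.+2) | i <- iota 0 k] = iota 0 k.
    rewrite -[RHS]map_id; apply/eq_in_map => i; rewrite mem_iota => /andP [_ Hi].
    by rewrite add0n in Hi; rewrite Hi.
  have -> : [seq (if i < k then i else i.+2) | i <- iota k (size v)] = iota k.+2 (size v).
    rewrite -[k.+2]add2n iotaDl; apply/eq_in_map => i; rewrite mem_iota => /andP [Hi _].
    by rewrite ltnNge Hi.
  by rewrite /k -(cat1s (size u)) -(cat1s (size u).+1) catA perm_catCA -catA perm_cat2l /= perm_refl.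
- by rewrite /= !nth_cat ltnn subnn ltnNge leqnSn /= subSn // subnn /= eqxx /= addnS /= addnn odd_double.
- move=> i Hi; rewrite !nth_cat /=.
  case: (ltnP i k) => Hik; first by rewrite Hik.
  rewrite ltnNge (leq_trans Hik (leqW (leqnSn _))) /= subSn ?(leqW Hik) // subSn //; by rewrite /= !subSS subn0 negbK.
Qed.
Definition g4 (j : nat) : nat :=
  match j with 0 => 2 | 1 => 3 | 2 => 0 | 3 => 1 | _ => j end.

Lemma stable_swap u v a b c d :
  stable (u ++ [:: c; d; a; b] ++ v) -> stable (u ++ [:: a; b; c; d] ++ v).
Proof.
set k := size u.
apply: (@stable_map _ _ (fun i => if i < k then i else k + g4 (i - k)) [::]).
- rewrite /= !size_cat /= iotaD add0n map_cat.
  have -> : [seq (if i < k then i else k + g4 (i - k)) | i <- iota 0 k] = iota 0 k.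
    rewrite -[RHS]map_id; apply/eq_in_map => i; rewrite mem_iota => /andP [_ Hi].
    by rewrite add0n in Hi; rewrite Hi.
  have E : forall n, iota k n = map (addn k) (iota 0 n).
    by move=> n; rewrite -iotaDl addn0.
  have -> : [seq (if i < k then i else k + g4 (i - k)) | i <- iota k (size v).+4]
      = map (addn k) (map g4 (iota 0 (size v).+4)).
    rewrite E -!map_comp; apply: eq_map => j /=.
    by rewrite ltnNge leq_addr /= addKn.
  rewrite /k perm_cat2l E; apply: perm_map.
  have -> : map g4 (iota 0 (size v).+4) = [:: 2; 3] ++ [:: 0; 1] ++ iota 4 (size v).
    rewrite /=; congr [:: _, _, _, _ & _].
    rewrite -[RHS]map_id; apply/eq_in_map => j; rewrite mem_iota => /andP [Hj _].
    by case: j Hj => [|[|[|[|j]]]].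
  by rewrite perm_catCA.
- by [].
- move=> i Hi; rewrite /k; case: (ltnP i (size u)) => Hik.
    by rewrite !nth_cat Hik.
  have -> : i = size u + (i - size u) by rewrite subnKC.
  move: (i - size u) => j.
  rewrite addKn !nth_cat !ltnNge !leq_addr /= !addKn oddD [odd (size u + j)]oddD.
  by case: j => [|[|[|[|j]]]].
Qed.
Lemma eo_nth s :
  evens s = [seq nth 0 s i | i <- iota 0 (size s) & ~~ odd i] /\
  odds s = [seq nth 0 s i | i <- iota 0 (size s) & odd i].
Proof.
elim: s => [|x s [IH1 IH2]] //=.
have E : iota 1 (size s) = map (addn 1) (iota 0 (size s)) by rewrite -iotaDl.
rewrite E !filter_map -!map_comp IH1 IH2 /=; split; [congr (_ :: _)|].
- congr map; apply: eq_filter => j /=; by rewrite ?add1n /= ?negbK.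
- congr map; apply: eq_filter => j /=; by rewrite ?add1n.
Qed.

Lemma filt_pairs (P : seq (nat * nat)) :
  all (fun p => odd (p.1 + p.2)) P ->
  filter (fun i => ~~ odd i) (flatten [seq [:: p.1; p.2] | p <- P])
    = map (fun p => if odd p.1 then p.2 else p.1) P /\
  filter odd (flatten [seq [:: p.1; p.2] | p <- P])
    = map (fun p => if odd p.1 then p.1 else p.2) P.
Proof.
elim: P => [|[p1 p2] P IH] //= /andP [Ho Hall].
have [IH1 IH2] := IH Hall; rewrite IH1 IH2.
move: Ho; rewrite /= oddD; by case: (odd p1); case: (odd p2).
Qed.

Lemma stable_bal s : stable s -> balanced s.
Proof.
move=> [P [HP HPa]].
have Hall : all (fun p => odd (p.1 + p.2)) P.
  apply/allP => p /(allP HPa) /andP [_ ->] //.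
have [F1 F2] := filt_pairs Hall.
have [E1 E2] := eo_nth s.
have HP' : perm_eq (iota 0 (size s)) (flatten [seq [:: p.1; p.2] | p <- P]) by rewrite perm_sym.
rewrite /balanced E1 E2.
rewrite (permPl (perm_map (nth 0 s) (perm_filter (fun i => ~~ odd i) HP'))).
rewrite F1 perm_sym.
rewrite (permPl (perm_map (nth 0 s) (perm_filter odd HP'))).
rewrite F2 -!map_comp.
have -> : map (nth 0 s \o (fun p : nat * nat => if odd p.1 then p.1 else p.2)) P
       = map (nth 0 s \o (fun p : nat * nat => if odd p.1 then p.2 else p.1)) P.
  apply/eq_in_map => p /(allP HPa) /andP [/eqP He _] /=.
  by case: (odd p.1).
exact: perm_refl.
Qed.

Lemma stable_nil : stable [::].
Proof. by exists [::]. Qed.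

Lemma stable_back s t : step s t -> stable t -> stable s.
Proof. case => [u v a b c d | u v a]; [exact: stable_swap | exact: stable_del]. Qed.

Theorem lemma3p2 (N : nat) (s : seq nat) :
  all (fun x => (1 <= x <= N)%N) s ->
  (stable s <-> reduces_to_nil s).
Proof.
move=> _; split.
- move=> Hs; apply: (@bal_red (size s)) => //; exact: stable_bal.
- elim => [|s1 t1 Hst _ IH]; first exact: stable_nil.
  exact: stable_back Hst IH.
Qed.
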